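(* Let $\mathcal{T}$ be any tree of nodes over an $N\times M$ matrix. Then there exists a submatrix $B$ such that every set of nodes of $\mathcal{T}$ whose union equals $B$ contains at least $\frac{NM}{N+M}$ nodes.
   Context: The matrix has coordinate set $\{0,\dots,N-1\}\times\{0,\dots,M-1\}$; a submatrix $[x_0,x_1][y_0,y_1]$ is the set of $(x,y)$ with $x_0\le x\le x_1$, $y_0\le y\le y_1$. Each node covers a subset of the coordinate set. A set of nodes is a tree (of nodes) if it is a rooted tree satisfying: (1) the root covers all coordinates; (2) every node covering more than one element has at least two children, each covering at least one element; (3) every node covering exactly one element has no children; (4) all children of the same node are mutually disjoint; (5) the union of all children of a node $n$ equals $n$. Nodes need not cover submatrices. *)

(* Defs.v *)
From mathcomp Require Import all_boot.
Set Implicit Arguments. Unset Strict Implicit. Unset Printing Implicit Defensive.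

Notation coord N M := ('I_N * 'I_M)%type.

Definition submatrix (N M : nat) (x0 x1 y0 y1 : nat) : {set coord N M} :=
  [set p : coord N M | (x0 <= p.1 <= x1) && (y0 <= p.2 <= y1)].

Definition is_submatrix (N M : nat) (B : {set coord N M}) : Prop :=
  exists x0 x1 y0 y1, x0 <= x1 < N /\ y0 <= y1 < M /\ B = submatrix N M x0 x1 y0 y1.

Definition parent_iter (V : Type) (parent : V -> option V) (k : nat) (v : V) :=
  iter k (fun o => obind parent o) (Some v).

Definition rooted_tree (V : finType) (parent : V -> option V) (r : V) : Prop :=
  parent r = None /\ forall v, exists k, parent_iter parent k v = Some r.

Definition children (V : finType) (parent : V -> option V) (n : V) : {set V} :=
  [set c | parent c == Some n].

Definition tree_of_nodes (N M : nat) (V : finType) (parent : V -> option V)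
    (r : V) (cov : V -> {set coord N M}) : Prop :=
  rooted_tree parent r /\
  [/\
      cov r = setT,
      (forall n, 1 < #|cov n| ->
          2 <= #|children parent n| /\
          forall c, c \in children parent n -> 1 <= #|cov c|),
      (forall n, #|cov n| = 1 -> children parent n = set0),
      (forall n c c', c \in children parent n -> c' \in children parent n ->
          c != c' -> [disjoint cov c & cov c'])
    &
      (forall n, children parent n != set0 ->
          \bigcup_(c in children parent n) cov c = cov n)].

(* Main.v *)
Require Import Defs.
From mathcomp Require Import all_boot.
From Stdlib Require Import Classical.
From mathcomp Require Import zify.

Set Implicit Arguments. Unset Strict Implicit. Unset Printing Implicit Defensive.

Lemma iter_None (V : Type) (parent : V -> option V) k :
  iter k (fun o => obind parent o) None = None.
Proof. by elim: k => //= k ->. Qed.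

Definition anc (V : Type) (parent : V -> option V) (a u : V) :=
  exists k, parent_iter parent k u = Some a.

Lemma anc_refl V parent (u : V) : anc parent u u.
Proof. by exists 0. Qed.

Lemma anc_parent V parent (u p a : V) :
  parent u = Some p -> anc parent a p -> anc parent a u.
Proof. move=> hp [k hk]; exists k.+1; by rewrite /parent_iter iterSr /= hp. Qed.

Lemma anc_cov (N M : nat) (V : finType) (parent : V -> option V) (r : V)
  (cov : V -> {set 'I_N * 'I_M}) (hT : tree_of_nodes parent r cov) a u :
  anc parent a u -> cov u \subset cov a.
Proof.
case: hT => _ [_ _ _ _ h5].
move=> [k]; elim: k u => [|k IH] u.
  by case=> ->.
rewrite /parent_iter iterSr /=.
case hp: (parent u) => [p|]; last by rewrite iter_None.
move=> h; apply: subset_trans (IH p h).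
have hc : u \in children parent p by rewrite inE hp.
have hne : children parent p != set0 by apply/set0Pn; exists u.
rewrite -(h5 p hne).
exact: (bigcup_sup _ hc).
Qed.

Lemma structure (N M : nat) (V : finType) (parent : V -> option V) (r : V)
  (cov : V -> {set 'I_N * 'I_M}) (hT : tree_of_nodes parent r cov) (u v : V) :
  anc parent u v \/ anc parent v u \/
  exists a b p, [/\ parent a = Some p, parent b = Some p, a != b,
                    anc parent a u & anc parent b v].
Proof.
case: hT => [[hr hreach] _].
have [k hk] := hreach u.
elim: k u hk => [|k IH] u hk.
  left; case: hk => ->; exact: hreach.
rewrite /parent_iter iterSr /= in hk.
case hp: (parent u) => [pu|]; rewrite hp in hk; last by rewrite iter_None in hk.
case: (IH pu hk) => [[j hj] | [hvp | [a [b [p [ha hb hab hau hbv]]]]]].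
- case: j hj => [|j] hj.
    move: hj; rewrite /parent_iter /= => -[->]; right; left; exact: anc_parent hp (anc_refl _ _).
  rewrite /parent_iter iterS in hj.
  case hw: (iter j _ (Some v)) => [w|]; rewrite hw /= in hj; last discriminate.
  have hwv : anc parent w v by exists j; exact: hw.
  case: (eqVneq u w) => [->|huw]; first by left.
  right; right; exists u, w, pu; split => //; exact: anc_refl.
- right; left; exact: anc_parent hp hvp.
- right; right; exists a, b, p; split => //; exact: anc_parent hp hau.
Qed.

Lemma laminar (N M : nat) (V : finType) (parent : V -> option V) (r : V)
  (cov : V -> {set 'I_N * 'I_M}) (hT : tree_of_nodes parent r cov) (u v : V) :
  cov u \subset cov v \/ cov v \subset cov u \/ [disjoint cov u & cov v].
Proof.
case: (structure hT u v) => [h | [h | [a [b [p [ha hb hab hau hbv]]]]]].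
- by right; left; exact: anc_cov hT _ _ h.
- by left; exact: anc_cov hT _ _ h.
- right; right.
  have h4 := hT.2; case: h4 => _ _ _ h4 _.
  have hd : [disjoint cov a & cov b].
    by apply: (h4 p); rewrite ?inE ?ha ?hb.
  apply: disjointWl (anc_cov hT hau) _.
  exact: disjointWr (anc_cov hT hbv) hd.
Qed.

Lemma card_bigcup_sum (T : finType) n (F : 'I_n -> {set T}) :
  #|\bigcup_(i < n) F i| <= \sum_(i < n) #|F i|.
Proof.
apply: (big_ind2 (fun (A : {set T}) (k : nat) => #|A| <= k)).
- by rewrite cards0.
- move=> A1 k1 A2 k2 h1 h2.
  apply: leq_trans (leq_card_setU A1 A2).1 _.
  exact: leq_add.
- by [].
Qed.

Theorem theorem3 (N M : nat) (hN : 0 < N) (hM : 0 < M)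
    (V : finType) (parent : V -> option V) (r : V) (cov : V -> {set 'I_N * 'I_M})
    (hT : tree_of_nodes parent r cov) :
  exists B : {set 'I_N * 'I_M}, is_submatrix B /\
    forall S : {set V}, \bigcup_(v in S) cov v = B -> N * M <= #|S| * (N + M).
Proof.
pose R := fun i : 'I_N => submatrix N M i i 0 (M.-1).
pose C := fun j : 'I_M => submatrix N M 0 (N.-1) j j.
have Rsub : forall i : 'I_N, is_submatrix (R i).
  move=> i; exists i, i, 0, M.-1; split; [|split] => //; apply/andP; split => //; lia.
have Csub : forall j : 'I_M, is_submatrix (C j).
  move=> j; exists 0, N.-1, j, j; split; [|split] => //; apply/andP; split => //; lia.
have RC : forall (i : 'I_N) (j : 'I_M) q, q \in R i -> q \in C j -> q = (i, j).
  move=> i j [a b]; rewrite !inE /= => /andP [h1 h2] /andP [h3 h4].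
  by congr pair; apply: val_inj => /=; lia.
have pR : forall (i : 'I_N) (j : 'I_M), (i, j) \in R i.
  move=> i j; rewrite inE /=; have := ltn_ord j; lia.
have pC : forall (i : 'I_N) (j : 'I_M), (i, j) \in C j.
  move=> i j; rewrite inE /=; have := ltn_ord i; lia.
apply: NNPP => hneg.
have bad : forall B, is_submatrix B -> exists S : {set V},
    \bigcup_(v in S) cov v = B /\ #|S| * (N + M) < N * M.
  move=> B hB; apply: NNPP => h; apply: hneg; exists B; split => // S hS.
  rewrite leqNgt; apply/negP => hlt; apply: h; by exists S.
pose P B (S : {set V}) := (\bigcup_(v in S) cov v == B) && (#|S| * (N + M) < N * M).
have pickok : forall B, is_submatrix B -> P B (odflt set0 [pick S | P B S]).
  move=> B hB; case: pickP => [S //| h0].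
  have [S [h1 h2]] := bad _ hB.
  by have := h0 S; rewrite /P h1 eqxx h2.
pose SR i := odflt set0 [pick S | P (R i) S].
pose SC j := odflt set0 [pick S | P (C j) S].
have SRP : forall i, P (R i) (SR i) by move=> i; exact: pickok.
have SCP : forall j, P (C j) (SC j) by move=> j; exact: pickok.
pose A := (\bigcup_(i < N) SR i) :|: (\bigcup_(j < M) SC j).
have cell : forall (i : 'I_N) (j : 'I_M), exists2 v, v \in A & cov v = [set (i, j)].
  move=> i j.
  have hUR : \bigcup_(v in SR i) cov v = R i by apply/eqP; case/andP: (SRP i).
  have hUC : \bigcup_(v in SC j) cov v = C j by apply/eqP; case/andP: (SCP j).
  have := pR i j; rewrite -hUR => /bigcupP [v hv pv].
  have := pC i j; rewrite -hUC => /bigcupP [w hw pw].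
  have svR : cov v \subset R i by rewrite -hUR; exact: (bigcup_sup _ hv).
  have swC : cov w \subset C j by rewrite -hUC; exact: (bigcup_sup _ hw).
  have vA : v \in A by rewrite inE; apply/orP; left; apply/bigcupP; exists i.
  have wA : w \in A by rewrite inE; apply/orP; right; apply/bigcupP; exists j.
  case: (laminar hT v w) => [h | [h | h]].
  - exists v => //; apply/eqP; rewrite eqEsubset sub1set pv andbT.
    apply/subsetP => q hq; rewrite inE; apply/eqP; apply: RC.
      exact: (subsetP svR).
    exact: (subsetP swC _ (subsetP h _ hq)).
  - exists w => //; apply/eqP; rewrite eqEsubset sub1set pw andbT.
    apply/subsetP => q hq; rewrite inE; apply/eqP; apply: RC.
      exact: (subsetP svR _ (subsetP h _ hq)).
    exact: (subsetP swC).
  - by have := disjointFr h pv; rewrite pw.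
pose p0 : 'I_N * 'I_M := (Ordinal hN, Ordinal hM).
pose f v := odflt p0 [pick q in cov v].
have key : N * M <= #|A|.
  have : [set: 'I_N * 'I_M] \subset [set f x | x in A].
    apply/subsetP => [[i j]] _; have [v vA hv] := cell i j.
    apply/imsetP; exists v => //; rewrite /f hv.
    case: pickP => [q|]; first by rewrite inE => /eqP.
    by move=> /(_ (i, j)); rewrite inE eqxx.
  move/subset_leq_card; rewrite cardsT card_prod !card_ord => h.
  exact: leq_trans h (leq_imset_card _ _).
have hA : #|A| <= \sum_(i < N) #|SR i| + \sum_(j < M) #|SC j|.
  apply: leq_trans (leq_card_setU _ _).1 _.
  exact: leq_add (card_bigcup_sum _) (card_bigcup_sum _).
have hR : \sum_(i < N) #|SR i| * (N + M) + N <= N * (N * M).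
  have : \sum_(i < N) (#|SR i| * (N + M)).+1 <= \sum_(i < N) (N * M).
    by apply: leq_sum => i _; case/andP: (SRP i).
  under eq_bigr do rewrite -addn1.
  by rewrite big_split /= !sum_nat_const card_ord muln1.
have hC : \sum_(j < M) #|SC j| * (N + M) + M <= M * (N * M).
  have : \sum_(j < M) (#|SC j| * (N + M)).+1 <= \sum_(j < M) (N * M).
    by apply: leq_sum => j _; case/andP: (SCP j).
  under eq_bigr do rewrite -addn1.
  by rewrite big_split /= !sum_nat_const card_ord muln1.
rewrite -big_distrl /= in hR; rewrite -big_distrl /= in hC.
move: hR hC (leq_trans key hA).
set X := \sum_(i < N) _; set Y := \sum_(j < M) _ => hR hC hXY.
have := leq_mul hXY (leqnn (N + M)).
nia.
Qed.
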